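(* Let $\mathcal X\subseteq\mathcal Y$ be subcategories of $\mathcal C$ such that $\mathcal Y$ is closed under extensions and $\mathcal X$ is a generator of $\mathcal Y$. Let $n\ge1$ and suppose there are $\mathbb E$-triangles $K_{i+1}\to Y_i\to K_i\dashrightarrow$ for $1\le i\le n$ with $K_1=A$, $K_{n+1}=A'$ and all $Y_i\in\mathcal Y$. Then there exist objects $U_n,V_n\in\mathcal C$ such that $U_n\in\mathcal Y$, there is an $\mathbb E$-triangle $U_n\to V_n\to A'\dashrightarrow$, and there are $\mathbb E$-triangles $L_{i+1}\to X_i\to L_i\dashrightarrow$ for $1\le i\le n$ with $L_1=A$, $L_{n+1}=V_n$ and all $X_i\in\mathcal X$.
   Context: $(\mathcal C,\mathbb E,\mathfrak s)$ is an extriangulated category in the sense of Nakaoka–Palu, Krull–Schmidt, with enough projectives and enough injectives; subcategories are full, additive, closed under isomorphisms. Closed under extensions: for every $\mathbb E$-triangle $A\to B\to C\dashrightarrow$ with $A,C$ in the subcategory, $B$ is in it. A subcategory $\mathcal X$ is a generator for $\mathcal Y$ if $\mathcal X\subseteq\mathcal Y$ and every $Y\in\mathcal Y$ admits an $\mathbb E$-triangle $Y'\to X\to Y\dashrightarrow$ with $X\in\mathcal X$ and $Y'\in\mathcal Y$. *)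

(* Defs.v *)
From HB Require Import structures.
From mathcomp Require Import all_boot all_algebra.
Set Implicit Arguments. Unset Strict Implicit. Unset Printing Implicit Defensive.
Import GRing.Theory.
Local Open Scope ring_scope.

Record PreAddCat := {
  Obj : Type;
  Hom : Obj -> Obj -> zmodType;
  idm : forall A, Hom A A;
  comp : forall A B C, Hom B C -> Hom A B -> Hom A C  (* comp g f = g o f *)
}.
Arguments Hom {p}.
Arguments idm {p}.
Arguments comp {p A B C}.

Section Cat.
Variable C : PreAddCat.

Definition iso (A B : Obj C) (f : Hom A B) :=
  exists g : Hom B A, comp g f = idm A /\ comp f g = idm B.

Definition isBiprod (A B S : Obj C) (i1 : Hom A S) (i2 : Hom B S)
    (p1 : Hom S A) (p2 : Hom S B) :=
  ((comp p1 i1 = idm A) /\ (comp p2 i2 = idm B) /\ (comp p1 i2 = 0) /\ (comp p2 i1 = 0) /\ (comp i1 p1 + comp i2 p2 = idm S)).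

Definition additive_cat :=
  (((forall (A B D F : Obj C) (h : Hom D F) (g : Hom B D) (f : Hom A B),
         comp h (comp g f) = comp (comp h g) f)) /\ ((forall (A B : Obj C) (f : Hom A B), comp (idm B) f = f /\ comp f (idm A) = f)) /\ ((forall (A B D : Obj C) (g g' : Hom B D) (f : Hom A B),
         comp (g + g') f = comp g f + comp g' f)) /\ ((forall (A B D : Obj C) (g : Hom B D) (f f' : Hom A B),
         comp g (f + f') = comp g f + comp g f')) /\ ((exists Z : Obj C, idm Z = 0) /\
      (forall A B : Obj C, exists S (i1 : Hom A S) (i2 : Hom B S) p1 p2,
         isBiprod i1 i2 p1 p2))).
End Cat.

(* Data of an extriangulated structure: the bifunctor E(-,-) (Ext Cc A = E(Cc,A))
   with its actions a_* (push) and c^* (pull), and the realization s, encoded as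
   the relation "A -x-> B -y-> Cc realizes delta". *)
Record ExtData (C : PreAddCat) := {
  Ext : Obj C -> Obj C -> zmodType;
  push : forall (Cc A A' : Obj C), Hom A A' -> Ext Cc A -> Ext Cc A';
  pull : forall (Cc' Cc A : Obj C), Hom Cc' Cc -> Ext Cc A -> Ext Cc' A;
  realizes : forall (A B Cc : Obj C), Ext Cc A -> Hom A B -> Hom B Cc -> Prop
}.
Arguments Ext {C}.
Arguments push {C e Cc A A'}.
Arguments pull {C e Cc' Cc A}.
Arguments realizes {C e A B Cc}.

Section Extri.
Variables (C : PreAddCat) (E : ExtData C).

Definition ET1 :=
  (((forall (Cc A : Obj C) (d : Ext E Cc A), push (idm A) d = d /\ pull (idm Cc) d = d)) /\ ((forall (Cc A A' A'' : Obj C) (a : Hom A A') (a' : Hom A' A'') (d : Ext E Cc A),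
         push (comp a' a) d = push a' (push a d))) /\ ((forall (Cc'' Cc' Cc A : Obj C) (c : Hom Cc' Cc) (c' : Hom Cc'' Cc') (d : Ext E Cc A),
         pull (comp c c') d = pull c' (pull c d))) /\ ((forall (Cc' Cc A A' : Obj C) (a : Hom A A') (c : Hom Cc' Cc) (d : Ext E Cc A),
         push a (pull c d) = pull c (push a d))) /\ ((forall (Cc A A' : Obj C) (a a' : Hom A A') (d d' : Ext E Cc A),
         push (a + a') d = push a d + push a' d /\ push a (d + d') = push a d + push a d') /\
      (forall (Cc' Cc A : Obj C) (c c' : Hom Cc' Cc) (d d' : Ext E Cc A),
         pull (c + c') d = pull c d + pull c' d /\ pull c (d + d') = pull c d + pull c d'))).

Definition equiv_seq (A B B' Cc : Obj C) (x : Hom A B) (y : Hom B Cc)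
    (x' : Hom A B') (y' : Hom B' Cc) :=
  exists b : Hom B B', iso b /\ comp b x = x' /\ comp y' b = y.

Definition s_realization :=
  (((forall (A Cc : Obj C) (d : Ext E Cc A),
         exists (B : Obj C) (x : Hom A B) (y : Hom B Cc), realizes d x y)) /\ ((forall (A B B' Cc : Obj C) (d : Ext E Cc A) (x : Hom A B) (y : Hom B Cc)
              (x' : Hom A B') (y' : Hom B' Cc),
         realizes d x y -> realizes d x' y' -> equiv_seq x y x' y')) /\ ((forall (A B B' Cc : Obj C) (d : Ext E Cc A) (x : Hom A B) (y : Hom B Cc)
              (x' : Hom A B') (y' : Hom B' Cc),
         realizes d x y -> equiv_seq x y x' y' -> realizes d x' y') /\
      (forall (A B Cc A' B' Cc' : Obj C) (d : Ext E Cc A) (d' : Ext E Cc' A')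
              (x : Hom A B) (y : Hom B Cc) (x' : Hom A' B') (y' : Hom B' Cc')
              (a : Hom A A') (c : Hom Cc Cc'),
         realizes d x y -> realizes d' x' y' -> push a d = pull c d' ->
         exists b : Hom B B', comp b x = comp x' a /\ comp y' b = comp c y))).

Definition ET2 :=
  (forall (A Cc S : Obj C) (i1 : Hom A S) (i2 : Hom Cc S) p1 p2,
     isBiprod i1 i2 p1 p2 -> realizes (0 : Ext E Cc A) i1 p2) /\
  (forall (A A' B B' Cc Cc' SA SB SC : Obj C)
          (iA1 : Hom A SA) (iA2 : Hom A' SA) (pA1 : Hom SA A) (pA2 : Hom SA A')
          (iB1 : Hom B SB) (iB2 : Hom B' SB) (pB1 : Hom SB B) (pB2 : Hom SB B')
          (iC1 : Hom Cc SC) (iC2 : Hom Cc' SC) (pC1 : Hom SC Cc) (pC2 : Hom SC Cc')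
          (d : Ext E Cc A) (d' : Ext E Cc' A')
          (x : Hom A B) (y : Hom B Cc) (x' : Hom A' B') (y' : Hom B' Cc'),
     isBiprod iA1 iA2 pA1 pA2 -> isBiprod iB1 iB2 pB1 pB2 -> isBiprod iC1 iC2 pC1 pC2 ->
     realizes d x y -> realizes d' x' y' ->
     realizes (push iA1 (pull pC1 d) + push iA2 (pull pC2 d'))
              (comp iB1 (comp x pA1) + comp iB2 (comp x' pA2))
              (comp iC1 (comp y pB1) + comp iC2 (comp y' pB2))).

Definition ET3 :=
  forall (A B Cc A' B' Cc' : Obj C) (d : Ext E Cc A) (d' : Ext E Cc' A')
         (x : Hom A B) (y : Hom B Cc) (x' : Hom A' B') (y' : Hom B' Cc')
         (a : Hom A A') (b : Hom B B'),
    realizes d x y -> realizes d' x' y' -> comp b x = comp x' a ->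
    exists c : Hom Cc Cc', comp c y = comp y' b /\ push a d = pull c d'.

Definition ET3op :=
  forall (A B Cc A' B' Cc' : Obj C) (d : Ext E Cc A) (d' : Ext E Cc' A')
         (x : Hom A B) (y : Hom B Cc) (x' : Hom A' B') (y' : Hom B' Cc')
         (b : Hom B B') (c : Hom Cc Cc'),
    realizes d x y -> realizes d' x' y' -> comp y' b = comp c y ->
    exists a : Hom A A', comp x' a = comp b x /\ push a d = pull c d'.

Definition ET4 :=
  forall (A B D Cc F : Obj C) (f : Hom A B) (f' : Hom B D) (g : Hom B Cc) (g' : Hom Cc F)
         (dl : Ext E D A) (dl' : Ext E F B),
    realizes dl f f' -> realizes dl' g g' ->
    exists (Eo : Obj C) (h' : Hom Cc Eo) (d : Hom D Eo) (e : Hom Eo F) (dl'' : Ext E Eo A),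
      ((realizes dl'' (comp g f) h') /\ (comp d f' = comp h' g) /\ (comp e h' = g') /\ (realizes (push f' dl') d e) /\ (pull d dl'' = dl) /\ (push f dl'' = pull e dl')).

Definition ET4op :=
  forall (D A B F Cc : Obj C) (f' : Hom D A) (f : Hom A B) (g' : Hom F B) (g : Hom B Cc)
         (dl : Ext E B D) (dl' : Ext E Cc F),
    realizes dl f' f -> realizes dl' g' g ->
    exists (Eo : Obj C) (d : Hom D Eo) (e : Hom Eo F) (h' : Hom Eo A) (dl'' : Ext E Cc Eo),
      ((realizes dl'' h' (comp g f)) /\ (comp h' d = f') /\ (comp f h' = comp g' e) /\ (realizes (pull g' dl) d e) /\ (dl' = push e dl'') /\ (push d dl = pull g dl'')).

Definition extriangulated :=
  ((additive_cat C) /\ (ET1) /\ (s_realization) /\ (ET2) /\ (ET3) /\ (ET3op) /\ (ET4) /\ (ET4op)).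

Definition has_Etri (A B Cc : Obj C) :=
  exists (x : Hom A B) (y : Hom B Cc) (d : Ext E Cc A), realizes d x y.

(* Full additive subcategory closed under isomorphisms, given by its objects. *)
Definition subcat (P : Obj C -> Prop) :=
  (((forall (A B : Obj C) (f : Hom A B), iso f -> P A -> P B)) /\ ((exists Z : Obj C, idm Z = 0 /\ P Z) /\
      (forall (A B S : Obj C) (i1 : Hom A S) (i2 : Hom B S) p1 p2,
         isBiprod i1 i2 p1 p2 -> P A -> P B -> P S))).

Definition ext_closed (P : Obj C -> Prop) :=
  forall A B Cc : Obj C, has_Etri A B Cc -> P A -> P Cc -> P B.

Definition generator (X Y : Obj C -> Prop) :=
  (forall A, X A -> Y A) /\
  (forall A, Y A -> exists Y' X0, ((X X0) /\ (Y Y') /\ (has_Etri Y' X0 A))).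
End Extri.

(* Main.v *)
Require Import Defs.
From mathcomp Require Import all_boot all_algebra.
Import Defs.
Set Implicit Arguments. Unset Strict Implicit. Unset Printing Implicit Defensive.
Import GRing.Theory.
Local Open Scope ring_scope.

Lemma assoc (C : PreAddCat) (E : ExtData C) (HC : extriangulated E) :
  forall (A B D F : Obj C) (h : Hom D F) (g : Hom B D) (f : Hom A B),
         comp h (comp g f) = comp (comp h g) f.
Proof. by case: HC => [[H _] _]. Qed.
Lemma compid1 (C : PreAddCat) (E : ExtData C) (HC : extriangulated E) :
  forall (A B : Obj C) (f : Hom A B), comp (idm B) f = f.
Proof. by case: HC => [[_ [H _]] _] A B f; case: (H A B f). Qed.
Lemma comp1id (C : PreAddCat) (E : ExtData C) (HC : extriangulated E) :
  forall (A B : Obj C) (f : Hom A B), comp f (idm A) = f.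
Proof. by case: HC => [[_ [H _]] _] A B f; case: (H A B f). Qed.
Lemma compDl (C : PreAddCat) (E : ExtData C) (HC : extriangulated E) :
  forall (A B D : Obj C) (g g' : Hom B D) (f : Hom A B),
         comp (g + g') f = comp g f + comp g' f.
Proof. by case: HC => [[_ [_ [H _]]] _]. Qed.
Lemma compDr (C : PreAddCat) (E : ExtData C) (HC : extriangulated E) :
  forall (A B D : Obj C) (g : Hom B D) (f f' : Hom A B),
         comp g (f + f') = comp g f + comp g f'.
Proof. by case: HC => [[_ [_ [_ [H _]]]] _]. Qed.


Lemma add_morph (U V : zmodType) (f : U -> V) :
  (forall x y, f (x + y) = f x + f y) -> forall x y, f (x - y) = f x - f y.
Proof.
move=> H x y. have h0 : f 0 = 0.
  by apply: (@addrI _ (f 0)); rewrite -H !addr0.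
have hN : f (- y) = - f y.
  by apply: (@addrI _ (f y)); rewrite -H !subrr.
by rewrite H hN.
Qed.
Lemma add_morph0 (U V : zmodType) (f : U -> V) :
  (forall x y, f (x + y) = f x + f y) -> f 0 = 0.
Proof. by move=> H; apply: (@addrI _ (f 0)); rewrite -H !addr0. Qed.

Lemma comp0l (C : PreAddCat) (E : ExtData C) (HC : extriangulated E) :
  forall (A B D : Obj C) (f : Hom A B), comp (0 : Hom B D) f = 0.
Proof. move=> A B D f. exact: (add_morph0 (f := fun g : Hom B D => comp g f) (fun x y => compDl HC x y f)). Qed.
Lemma comp0r (C : PreAddCat) (E : ExtData C) (HC : extriangulated E) :
  forall (A B D : Obj C) (g : Hom B D), comp g (0 : Hom A B) = 0.
Proof. move=> A B D g. exact: (add_morph0 (compDr HC g)). Qed.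
Lemma compBl (C : PreAddCat) (E : ExtData C) (HC : extriangulated E) :
  forall (A B D : Obj C) (g g' : Hom B D) (f : Hom A B),
         comp (g - g') f = comp g f - comp g' f.
Proof. move=> A B D g g' f. exact: (add_morph (f := fun g : Hom B D => comp g f) (fun x y => compDl HC x y f)). Qed.
Lemma compBr (C : PreAddCat) (E : ExtData C) (HC : extriangulated E) :
  forall (A B D : Obj C) (g : Hom B D) (f f' : Hom A B),
         comp g (f - f') = comp g f - comp g f'.
Proof. move=> A B D g f f'. exact: (add_morph (compDr HC g)). Qed.

Lemma pushid (C : PreAddCat) (E : ExtData C) (HC : extriangulated E) :
  forall (Cc A : Obj C) (d : Ext E Cc A), push (idm A) d = d.
Proof. by case: HC => [_ [[H _] _]] Cc A d; case: (H Cc A d). Qed.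
Lemma pullid (C : PreAddCat) (E : ExtData C) (HC : extriangulated E) :
  forall (Cc A : Obj C) (d : Ext E Cc A), pull (idm Cc) d = d.
Proof. by case: HC => [_ [[H _] _]] Cc A d; case: (H Cc A d). Qed.
Lemma pushc (C : PreAddCat) (E : ExtData C) (HC : extriangulated E) :
  forall (Cc A A' A'' : Obj C) (a : Hom A A') (a' : Hom A' A'') (d : Ext E Cc A),
         push (comp a' a) d = push a' (push a d).
Proof. by case: HC => [_ [[_ [H _]] _]]. Qed.
Lemma pullc (C : PreAddCat) (E : ExtData C) (HC : extriangulated E) :
  forall (Cc'' Cc' Cc A : Obj C) (c : Hom Cc' Cc) (c' : Hom Cc'' Cc') (d : Ext E Cc A),
         pull (comp c c') d = pull c' (pull c d).
Proof. by case: HC => [_ [[_ [_ [H _]]] _]]. Qed.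
Lemma pushpull (C : PreAddCat) (E : ExtData C) (HC : extriangulated E) :
  forall (Cc' Cc A A' : Obj C) (a : Hom A A') (c : Hom Cc' Cc) (d : Ext E Cc A),
         push a (pull c d) = pull c (push a d).
Proof. by case: HC => [_ [[_ [_ [_ [H _]]]] _]]. Qed.
Lemma pushDl (C : PreAddCat) (E : ExtData C) (HC : extriangulated E) :
  forall (Cc A A' : Obj C) (a a' : Hom A A') (d : Ext E Cc A),
         push (a + a') d = push a d + push a' d.
Proof. case: HC => [_ [[_ [_ [_ [_ [H _]]]]] _]] Cc A A' a a' d.
by case: (H Cc A A' a a' d d). Qed.
Lemma pushDr (C : PreAddCat) (E : ExtData C) (HC : extriangulated E) :
  forall (Cc A A' : Obj C) (a : Hom A A') (d d' : Ext E Cc A),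
         push a (d + d') = push a d + push a d'.
Proof. case: HC => [_ [[_ [_ [_ [_ [H _]]]]] _]] Cc A A' a d d'.
by case: (H Cc A A' a a d d'). Qed.
Lemma pullDl (C : PreAddCat) (E : ExtData C) (HC : extriangulated E) :
  forall (Cc' Cc A : Obj C) (c c' : Hom Cc' Cc) (d : Ext E Cc A),
         pull (c + c') d = pull c d + pull c' d.
Proof. case: HC => [_ [[_ [_ [_ [_ [_ H]]]]] _]] Cc' Cc A c c' d.
by case: (H Cc' Cc A c c' d d). Qed.
Lemma pullDr (C : PreAddCat) (E : ExtData C) (HC : extriangulated E) :
  forall (Cc' Cc A : Obj C) (c : Hom Cc' Cc) (d d' : Ext E Cc A),
         pull c (d + d') = pull c d + pull c d'.
Proof. case: HC => [_ [[_ [_ [_ [_ [_ H]]]]] _]] Cc' Cc A c d d'.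
by case: (H Cc' Cc A c c d d'). Qed.
Lemma push0l (C : PreAddCat) (E : ExtData C) (HC : extriangulated E) :
  forall (Cc A A' : Obj C) (d : Ext E Cc A), push (0 : Hom A A') d = 0.
Proof. move=> Cc A A' d; exact: (add_morph0 (f := fun a : Hom A A' => push a d) (fun x y => pushDl HC x y d)). Qed.
Lemma pull0l (C : PreAddCat) (E : ExtData C) (HC : extriangulated E) :
  forall (Cc' Cc A : Obj C) (d : Ext E Cc A), pull (0 : Hom Cc' Cc) d = 0.
Proof. move=> Cc' Cc A d; exact: (add_morph0 (f := fun a : Hom Cc' Cc => pull a d) (fun x y => pullDl HC x y d)). Qed.
Lemma push0r (C : PreAddCat) (E : ExtData C) (HC : extriangulated E) :
  forall (Cc A A' : Obj C) (a : Hom A A'), push a (0 : Ext E Cc A) = 0.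
Proof. move=> Cc A A' a; exact: (add_morph0 (pushDr HC a)). Qed.
Lemma pull0r (C : PreAddCat) (E : ExtData C) (HC : extriangulated E) :
  forall (Cc' Cc A : Obj C) (c : Hom Cc' Cc), pull c (0 : Ext E Cc A) = 0.
Proof. move=> Cc' Cc A c; exact: (add_morph0 (pullDr HC c)). Qed.
Lemma pushBr (C : PreAddCat) (E : ExtData C) (HC : extriangulated E) :
  forall (Cc A A' : Obj C) (a : Hom A A') (d d' : Ext E Cc A),
         push a (d - d') = push a d - push a d'.
Proof. move=> Cc A A' a; exact: (add_morph (pushDr HC a)). Qed.
Lemma pullBr (C : PreAddCat) (E : ExtData C) (HC : extriangulated E) :
  forall (Cc' Cc A : Obj C) (c : Hom Cc' Cc) (d d' : Ext E Cc A),
         pull c (d - d') = pull c d - pull c d'.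
Proof. move=> Cc' Cc A c; exact: (add_morph (pullDr HC c)). Qed.

Lemma real_ex (C : PreAddCat) (E : ExtData C) (HC : extriangulated E) :
  forall (A Cc : Obj C) (d : Ext E Cc A),
         exists (B : Obj C) (x : Hom A B) (y : Hom B Cc), realizes d x y.
Proof. by case: HC => [_ [_ [[H _] _]]]. Qed.
Lemma real_uniq (C : PreAddCat) (E : ExtData C) (HC : extriangulated E) :
  forall (A B B' Cc : Obj C) (d : Ext E Cc A) (x : Hom A B) (y : Hom B Cc)
              (x' : Hom A B') (y' : Hom B' Cc),
         realizes d x y -> realizes d x' y' -> equiv_seq x y x' y'.
Proof. by case: HC => [_ [_ [[_ [H _]] _]]]. Qed.
Lemma real_mor (C : PreAddCat) (E : ExtData C) (HC : extriangulated E) :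
      forall (A B Cc A' B' Cc' : Obj C) (d : Ext E Cc A) (d' : Ext E Cc' A')
              (x : Hom A B) (y : Hom B Cc) (x' : Hom A' B') (y' : Hom B' Cc')
              (a : Hom A A') (c : Hom Cc Cc'),
         realizes d x y -> realizes d' x' y' -> push a d = pull c d' ->
         exists b : Hom B B', comp b x = comp x' a /\ comp y' b = comp c y.
Proof. by case: HC => [_ [_ [[_ [_ [_ H]]] _]]]. Qed.
Lemma real_bip (C : PreAddCat) (E : ExtData C) (HC : extriangulated E) :
  forall (A Cc S : Obj C) (i1 : Hom A S) (i2 : Hom Cc S) p1 p2,
     isBiprod i1 i2 p1 p2 -> realizes (0 : Ext E Cc A) i1 p2.
Proof. by case: HC => [_ [_ [_ [[H _] _]]]]. Qed.
Lemma bip_ex (C : PreAddCat) (E : ExtData C) (HC : extriangulated E) :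
      forall A B : Obj C, exists S (i1 : Hom A S) (i2 : Hom B S) p1 p2,
         isBiprod i1 i2 p1 p2.
Proof. by case: HC => [[_ [_ [_ [_ [_ H]]]]] _]. Qed.
Lemma zero_ex (C : PreAddCat) (E : ExtData C) (HC : extriangulated E) :
      exists Z : Obj C, idm Z = 0.
Proof. by case: HC => [[_ [_ [_ [_ [H _]]]]] _]. Qed.
Lemma et3op (C : PreAddCat) (E : ExtData C) (HC : extriangulated E) : ET3op E.
Proof. by case: HC => [_ [_ [_ [_ [_ [H _]]]]]]. Qed.
Lemma et4 (C : PreAddCat) (E : ExtData C) (HC : extriangulated E) : ET4 E.
Proof. by case: HC => [_ [_ [_ [_ [_ [_ [H _]]]]]]]. Qed.
Lemma et4op (C : PreAddCat) (E : ExtData C) (HC : extriangulated E) : ET4op E.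
Proof. by case: HC => [_ [_ [_ [_ [_ [_ [_ H]]]]]]]. Qed.

Lemma real_comp0 (C : PreAddCat) (E : ExtData C) (HC : extriangulated E) :
  forall (A B Cc : Obj C) (d : Ext E Cc A) (x : Hom A B) (y : Hom B Cc),
  realizes d x y -> comp y x = 0.
Proof.
move=> A B Cc d x y Hd.
have [Z HZ] := zero_ex HC.
have Hb : isBiprod (idm A) (0 : Hom Z A) (idm A) (0 : Hom A Z).
  rewrite /isBiprod (compid1 HC) !(comp0l HC) !(comp0r HC) HZ; do !split => //.
  by rewrite addr0.
have H0 := real_bip HC Hb.
have [b [Hb1 Hb2]] := real_mor HC (a := idm A) (c := (0 : Hom Z Cc)) H0 Hd
   (etrans (pushid HC _) (esym (@pull0l _ _ HC _ _ _ d))).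
by move: Hb1 Hb2; rewrite !(comp1id HC) (comp0l HC) => ->.
Qed.

Lemma split_bip (C : PreAddCat) (E : ExtData C) (HC : extriangulated E)
  (A B Cc : Obj C) (x : Hom A B) (y : Hom B Cc) :
  realizes (0 : Ext E Cc A) x y -> exists (s : Hom Cc B) (r : Hom B A), isBiprod x s r y.
Proof.
move=> Hd.
have [S [i1 [i2 [p1 [p2 Hb]]]]] := bip_ex HC A Cc.
have H0 := real_bip HC Hb.
have [phi [[psi [Hpp Hpp']] [Hx Hy]]] := real_uniq HC H0 Hd.
exists (comp phi i2), (comp p1 psi).
case: Hb => [h1 [h2 [h3 [h4 h5]]]].
have Hy' : y = comp p2 psi by rewrite -Hy -(assoc HC) Hpp' (comp1id HC).
have K : forall D (u : Hom D S), comp psi (comp phi u) = u.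
  by move=> D u; rewrite (assoc HC) Hpp (compid1 HC).
rewrite /isBiprod -Hx Hy' -!(assoc HC) !K h1 h2 h3 h4; do !split => //.
by rewrite -(compDr HC) !(assoc HC) -(compDl HC) h5 (compid1 HC) Hpp'.
Qed.

Lemma exactE (C : PreAddCat) (E : ExtData C) (HC : extriangulated E)
  (A1 B1 Cc A2 : Obj C) (d1 : Ext E Cc A1) (x1 : Hom A1 B1) (y1 : Hom B1 Cc)
  (eps : Ext E Cc A2) :
  realizes d1 x1 y1 -> pull y1 eps = 0 -> exists a : Hom A1 A2, push a d1 = eps.
Proof.
move=> Hd Hz.
have [N [u [v Hu]]] := real_ex HC eps.
have [S [i1 [i2 [p1 [p2 Hb]]]]] := bip_ex HC A2 B1.
have H0 := real_bip HC Hb.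
have [b' [_ Hb']] := real_mor HC (a := idm A2) (c := y1) H0 Hu
   (etrans (pushid HC _) (esym Hz)).
case: Hb => [h1 [h2 [h3 [h4 h5]]]].
have Hvb : comp v (comp b' i2) = comp (idm Cc) y1.
  by rewrite (assoc HC) Hb' -(assoc HC) h2 (comp1id HC) (compid1 HC).
have [a [_ Ha]] := et3op HC Hd Hu Hvb.
by exists a; rewrite Ha (pullid HC).
Qed.

Lemma pullbackY (C : PreAddCat) (E : ExtData C) (HC : extriangulated E)
  (Y : Obj C -> Prop) (HY : subcat Y) (HYe : ext_closed E Y)
  (A1 B1 Cc A2 B2 : Obj C) (d1 : Ext E Cc A1) (x1 : Hom A1 B1) (y1 : Hom B1 Cc)
  (d2 : Ext E Cc A2) (x2 : Hom A2 B2) (y2 : Hom B2 Cc) :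
  realizes d1 x1 y1 -> realizes d2 x2 y2 -> Y A1 -> Y B2 ->
  exists M, Y M /\ has_Etri E A2 M B1.
Proof.
move=> H1 H2 YA1 YB2.
have [M [m [e Hme]]] := real_ex HC (pull y1 d2).
have [Eo [d [e' [h' [dl [R1 [_ [_ [R4 [R5 R6]]]]]]]]]] := et4op HC Hme H1.
have R4' : realizes (0 : Ext E A1 A2) d e'.
  by rewrite -(pullc HC) (real_comp0 HC H1) (pull0l HC) in R4.
have [s0 [r [b1 [b2 [b3 [b4 b5]]]]]] := split_bip HC R4'.
have Heps : pull y1 (d2 - push r dl) = 0.
  by rewrite (pullBr HC) -(pushpull HC) -R6 -(pushc HC) b1 (pushid HC) subrr.
have [a Ha] := exactE HC H1 Heps.
pose r' := r + comp a e'.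
pose s' := s0 - comp d a.
have Hr' : push r' dl = d2.
  by rewrite (pushDl HC) (pushc HC) -R5 Ha addrC subrK.
have Hbip' : isBiprod s' d e' r'.
  have e1 : comp r (comp d a) = a by rewrite (assoc HC) b1 (compid1 HC).
  have e2 : comp (comp a e') s0 = a by rewrite -(assoc HC) b2 (comp1id HC).
  have e3 : comp (comp a e') (comp d a) = 0.
    by rewrite -(assoc HC) [comp e' _](assoc HC) b4 (comp0l HC) (comp0r HC).
  rewrite /isBiprod /s' /r'; do !split => //.
  - by rewrite (compBr HC) b2 (assoc HC) b4 (comp0l HC) subr0.
  - by rewrite (compDl HC) b1 -(assoc HC) b4 (comp0r HC) addr0.
  - by rewrite (compDl HC) !(compBr HC) b3 e1 e2 e3 sub0r subr0 addNr.
  - rewrite (compBl HC) (compDr HC) (assoc HC d a e') -b5 addrC -!addrA.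
    by congr (_ + _); rewrite addrC subrK.
have R0 := real_bip HC Hbip'.
have [Eo2 [h2 [d3 [e3 [dl3 [Q1 [_ [_ [Q4 _]]]]]]]]] := et4 HC R0 R1.
rewrite Hr' in Q4.
have [b [Hiso _]] := real_uniq HC H2 Q4.
have YEo2 : Y Eo2 by case: HY => [HI _]; exact: (HI _ _ b Hiso YB2).
exists M; split; last by exists m, e, (pull y1 d2).
apply: (HYe A1 M Eo2) => //.
by exists (comp h' s'), h2, dl3.
Qed.

Lemma stepL (C : PreAddCat) (E : ExtData C) (HC : extriangulated E)
  (X Y : Obj C -> Prop) (HY : subcat Y) (HYe : ext_closed E Y) (HXY : generator E X Y)
  (L K K' Y2 U : Obj C) :
  Y U -> Y Y2 -> has_Etri E U L K -> has_Etri E K' Y2 K ->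
  exists X1 L' U', [/\ X X1, Y U', has_Etri E L' X1 L & has_Etri E U' L' K'].
Proof.
move=> YU YY2 [g' [p [dl1 H1]]] [x2 [y2 [dl2 H2]]].
have [M [YM [m [e [dm Hm]]]]] := pullbackY HC HY HYe H1 H2 YU YY2.
have [Y'' [X0 [XX0 [YY'' [f' [f [dl Hf]]]]]]] := HXY.2 M YM.
have [Eo [d [e' [h' [dl'' [R1 [_ [_ [R4 _]]]]]]]]] := et4op HC Hf Hm.
exists X0, Eo, Y''; split => //.
  by exists h', (comp e f), dl''.
by exists d, e', (pull m dl).
Qed.

Local Close Scope ring_scope.

Theorem lemma3p8 (C : PreAddCat) (E : ExtData C) (HC : extriangulated E)
    (X Y : Obj C -> Prop) (HX : subcat X) (HY : subcat Y)
    (HYe : ext_closed E Y) (HXY : generator E X Y)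
    (n : nat) (hn : 1 <= n) (A A' : Obj C) (K Yo : nat -> Obj C)
    (hK1 : K 1 = A) (hKn : K n.+1 = A')
    (hY : forall i, 1 <= i <= n -> Y (Yo i))
    (htri : forall i, 1 <= i <= n -> has_Etri E (K i.+1) (Yo i) (K i)) :
  exists U V : Obj C, [/\ Y U, has_Etri E U V A' &
    exists L Xo : nat -> Obj C, [/\ L 1 = A, L n.+1 = V &
      forall i, 1 <= i <= n -> X (Xo i) /\ has_Etri E (L i.+1) (Xo i) (L i)]].
Proof.
have claim : forall k, (k <= n)%N -> exists U V, [/\ Y U, has_Etri E U V (K k.+1) &
    exists L Xo : nat -> Obj C, [/\ L 1 = A, L k.+1 = V &
      forall i, 1 <= i <= k -> X (Xo i) /\ has_Etri E (L i.+1) (Xo i) (L i)]].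
  elim=> [_|k IH hk].
    case: HY => [_ [[Z [HZ YZ]] _]].
    exists Z, A; split => //.
      rewrite hK1; exists 0%R, (idm A), 0%R.
      apply: (real_bip HC (p1 := 0%R)).
      rewrite /isBiprod (comp0l HC) (comp0r HC) (compid1 HC) HZ.
      by do !split => //; rewrite ?(comp0l HC) ?(comp0r HC) ?(compid1 HC) ?(comp1id HC) ?GRing.add0r.
    exists (fun _ => A), (fun _ => A); split => // i; rewrite leqn0 andbC.
    by case: i.
  have [U [V [YU TU [L [Xo [L1 Lk HL]]]]]] := IH (ltnW hk).
  have hk1 : 1 <= k.+1 <= n by rewrite hk.
  have [X1 [L' [U' [XX1 YU' T1 T2]]]] :=
    stepL HC HY HYe HXY YU (hY _ hk1) TU (htri _ hk1).
  exists U', L'; split => //.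
  exists (fun i => if (i <= k.+1)%N then L i else L'),
         (fun i => if (i <= k)%N then Xo i else X1); split => //=.
    by rewrite ltnn.
  move=> i /andP [i1 ik].
  case: (leqP i k) => ik'.
    by rewrite ltnS ik' (leqW ik'); apply: HL; rewrite i1 ik'.
  have -> : i = k.+1 by apply/eqP; rewrite eqn_leq ik ik'.
  by rewrite ltnn leqnn Lk.
have := claim n (leqnn n); by rewrite hKn.
Qed.
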